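(* Let $\nabla$ be a module connection on $M$. Then $(\mathsf K_\nabla,\mathsf H_\nabla)$ is a tangent category connection on $\mathsf q_M$.
   Context: Fix a commutative ring $R$, a commutative $R$-algebra $A$ and an $A$-module $M$. ''Algebra'' means commutative $R$-algebra and ''algebra map'' means $R$-algebra homomorphism. $\Omega(A)$ is the $A$-module of Kähler differentials of $A$ over $R$, with universal derivation $\mathsf d:A\to\Omega(A)$. A (module) connection on $M$ is an $R$-linear map $\nabla:M\to\Omega(A)\otimes_AM$ such that $\nabla(am)=a\nabla(m)+\mathsf d(a)\otimes_Am$ for all $a\in A$, $m\in M$. Tangent algebras: for an algebra $B$, $\mathsf T(B):=\mathrm{Sym}_B(\Omega(B))$, i.e. the $B$-algebra generated by symbols $\mathsf d(b)$ ($b\in B$) subject to $\mathsf d(b+b')=\mathsf d(b)+\mathsf d(b')$, $\mathsf d(bb')=b\,\mathsf d(b')+b'\,\mathsf d(b)$, $\mathsf d(r1)=0$ ($r\in R$). An algebra map out of $\mathsf T(B)$ is determined by its values on the generators $b$, $\mathsf d(b)$. Write $\mathsf T^2(B)=\mathsf T(\mathsf T(B))$ and denote the universal derivation $\mathsf T(B)\to\mathsf T^2(B)$ by $\mathsf d'$; so $\mathsf T^2(B)$ is generated over $B$ by $\mathsf d(b),\mathsf d'(b),\mathsf d'\mathsf d(b)$. For an algebra map $h:X\to Y$, $\mathsf T(h):\mathsf T(X)\to\mathsf T(Y)$ sends $x\mapsto h(x)$ and $\delta_X(x)\mapsto\delta_Y(h(x))$, where $\delta$ denotes the relevant universal derivation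 ($\mathsf d$ for $B\to\mathsf T(B)$, $\mathsf d'$ for $\mathsf T(B)\to\mathsf T^2(B)$). Algebra maps defined on generators $b\in B$: $\mathsf p_B:B\to\mathsf T(B)$ the inclusion; $0_B:\mathsf T(B)\to B$, $b\mapsto b$, $\mathsf d(b)\mapsto 0$; $\ell_B:\mathsf T^2(B)\to\mathsf T(B)$, $b\mapsto b$, $\mathsf d(b)\mapsto 0$, $\mathsf d'(b)\mapsto0$, $\mathsf d'\mathsf d(b)\mapsto\mathsf d(b)$; $\mathsf c_B:\mathsf T^2(B)\to\mathsf T^2(B)$, $b\mapsto b$, $\mathsf d(b)\mapsto\mathsf d'(b)$, $\mathsf d'(b)\mapsto\mathsf d(b)$, $\mathsf d'\mathsf d(b)\mapsto\mathsf d'\mathsf d(b)$. (These are, read in algebras, the structure maps of the Rosický tangent structure on affine schemes over $R$, i.e. on the opposite of the category of commutative $R$-algebras.) Differential bundle of $M$: $\mathsf S_A(M)$ is the symmetric $A$-algebra on $M$ (generated by $a\in A$, $m\in M$). Algebra maps: $\mathsf q_M:A\to\mathsf S_A(M)$ the inclusion; $\mathsf z_M:\mathsf S_A(M)\to A$, $a\mapsto a$, $m\mapsto 0$; $\lambda_M:\mathsf T(\mathsf S_A(M))\to\mathsf S_A(M)$, $a\mapsto a$, $m\mapsto0$, $\mathsf d(a)\mapsto 0$, $\mathsf d(m)\mapsto m$. Let $U:\mathsf T(A)\otimes_A\mathsf S_A(M)\to\mathsf T(\mathsf S_A(M))$ be the algebra map $w\otimes v\mapsto\mathsf T(\mathsf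 q_M)(w)\,v$ (we regard $\Omega(A)\otimes_AM\subseteq\mathsf T(A)\otimes_A\mathsf S_A(M)$). A horizontal connection on $\mathsf q_M$ is an algebra map $\mathsf H:\mathsf T(\mathsf S_A(M))\to\mathsf T(A)\otimes_A\mathsf S_A(M)$ such that (H1) $\mathsf H(\mathsf T(\mathsf q_M)(w))=w\otimes1$ for all $w\in\mathsf T(A)$; (H2) $\mathsf H(v)=1\otimes v$ for all $v\in\mathsf S_A(M)$; (H3) $(\ell_A\otimes0_{\mathsf S_A(M)})\circ\theta\circ\mathsf T(\mathsf H)=\mathsf H\circ\ell_{\mathsf S_A(M)}$; (H4) $(0_{\mathsf T(A)}\otimes\lambda_M)\circ\theta\circ\mathsf T(\mathsf H)=\mathsf H\circ\mathsf T(\lambda_M)\circ\mathsf c_{\mathsf S_A(M)}$. Here $\mathsf T^2(A)\otimes_{\mathsf T(A)}\mathsf T(\mathsf S_A(M))$ is formed via $\mathsf T(\mathsf p_A):\mathsf T(A)\to\mathsf T^2(A)$ ($a\mapsto a$, $\mathsf d(a)\mapsto\mathsf d'(a)$) and $\mathsf T(\mathsf q_M)$; $\theta:\mathsf T(\mathsf T(A)\otimes_A\mathsf S_A(M))\to\mathsf T^2(A)\otimes_{\mathsf T(A)}\mathsf T(\mathsf S_A(M))$ is the canonical isomorphism, $w\otimes v\mapsto w\otimes v$, $\mathsf d(w\otimes v)\mapsto\mathsf d'(w)\otimes v+w\otimes\mathsf d(v)$; the maps $\ell_A\otimes0_{\mathsf S_A(M)}$ and $0_{\mathsf T(A)}\otimes\lambda_M$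 into $\mathsf T(A)\otimes_A\mathsf S_A(M)$ are induced factorwise, where $0_{\mathsf T(A)}:\mathsf T^2(A)\to\mathsf T(A)$ sends $a\mapsto a$, $\mathsf d(a)\mapsto\mathsf d(a)$, $\mathsf d'(a)\mapsto0$, $\mathsf d'\mathsf d(a)\mapsto0$. A vertical connection on $\mathsf q_M$ is an algebra map $\mathsf K:\mathsf S_A(M)\to\mathsf T(\mathsf S_A(M))$ such that (K1) $\lambda_M\circ\mathsf K=\mathrm{id}$; (K2) $\mathsf K(a)=a$ for all $a\in A$; (K3) $\ell_{\mathsf S_A(M)}\circ\mathsf T(\mathsf K)=\mathsf K\circ\lambda_M$; (K4) $\mathsf T(\lambda_M)\circ\mathsf c_{\mathsf S_A(M)}\circ\mathsf T(\mathsf K)=\mathsf K\circ\lambda_M$. A (tangent category) connection on $\mathsf q_M$ is a pair $(\mathsf K,\mathsf H)$ of a vertical and a horizontal connection on $\mathsf q_M$ such that $\mathsf H\circ\mathsf K=\iota_1\circ\mathsf q_M\circ\mathsf z_M$ (where $\iota_1(v)=1\otimes v$), i.e. $\mathsf H(\mathsf K(m))=0$ for $m\in M$, and $\mathsf K(m)+U(\mathsf H(\mathsf d(m)))=\mathsf d(m)$ for all $m\in M$. Given a module connection $\nabla$ on $M$: $\mathsf H_\nabla:\mathsf T(\mathsf S_A(M))\to\mathsf T(A)\otimes_A\mathsf S_A(M)$ is the algebra map with $a\mapsto a\otimes1$, $m\mapsto 1\otimes m$, $\mathsf d(a)\mapsto\mathsf d(a)\otimes 1$, $\mathsf d(m)\mapsto\nabla(m)$;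 and $\mathsf K_\nabla:\mathsf S_A(M)\to\mathsf T(\mathsf S_A(M))$ is the algebra map with $a\mapsto a$, $m\mapsto\mathsf d(m)-U(\nabla(m))$ (i.e. if $\nabla(m)=\sum_i\mathsf d(a_i)\otimes m_i$ then $\mathsf K_\nabla(m)=\mathsf d(m)-\sum_im_i\,\mathsf d(a_i)$). *)

(* Defs.v *)
(* The constructions Sym_B(Omega(B)) (tangent algebra), Sym_A(M) and the tensor
   product of algebras are specified by their defining universal properties
   (presentation by generators and relations <-> initial algebra). *)
From HB Require Import structures.
From mathcomp Require Import all_boot all_algebra.

Set Implicit Arguments.
Unset Strict Implicit.
Unset Printing Implicit Defensive.

Import GRing.Theory.
Local Open Scope ring_scope.

Section TangentDefs.
Variable R : comPzRingType.

Definition is_derivation (B C : comAlgType R) (f : B -> C) (delta : B -> C) :=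
  [/\ forall x y, delta (x + y) = delta x + delta y,
      forall x y, delta (x * y) = f x * delta y + f y * delta x &
      forall r : R, delta (r%:A) = 0].

(* The tangent algebra T(B) = Sym_B(Omega(B)): the B-algebra generated by
   symbols d(b) subject to additivity, Leibniz and d(r1) = 0, i.e. the initial
   algebra under B equipped with such a derivation. *)
Record tangent_alg (B : comAlgType R) := TangentAlg {
  tan_carrier :> comAlgType R;
  tan_p : {lrmorphism B -> tan_carrier};
  tan_d : B -> tan_carrier;
  tan_d_der : is_derivation tan_p tan_d;
  tan_ex : forall (C : comAlgType R) (f : {lrmorphism B -> C}) (delta : B -> C),
    is_derivation f delta ->
    exists h : {lrmorphism tan_carrier -> C},
      (forall b, h (tan_p b) = f b) /\ (forall b, h (tan_d b) = delta b);
  tan_uniq : forall (C : comAlgType R) (h h' : {lrmorphism tan_carrier -> C}),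
    (forall b, h (tan_p b) = h' (tan_p b)) ->
    (forall b, h (tan_d b) = h' (tan_d b)) ->
    forall x, h x = h' x
}.

Record sym_alg (A : comAlgType R) (M : lmodType A) := SymAlg {
  sym_carrier :> comAlgType R;
  sym_q : {lrmorphism A -> sym_carrier};
  sym_j : M -> sym_carrier;
  sym_j_add : forall m m', sym_j (m + m') = sym_j m + sym_j m';
  sym_j_scale : forall (a : A) (m : M), sym_j (a *: m) = sym_q a * sym_j m;
  sym_ex : forall (C : comAlgType R) (f : {lrmorphism A -> C}) (g : M -> C),
    (forall m m', g (m + m') = g m + g m') ->
    (forall (a : A) (m : M), g (a *: m) = f a * g m) ->
    exists h : {lrmorphism sym_carrier -> C},
      (forall a, h (sym_q a) = f a) /\ (forall m, h (sym_j m) = g m);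
  sym_uniq : forall (C : comAlgType R) (h h' : {lrmorphism sym_carrier -> C}),
    (forall a, h (sym_q a) = h' (sym_q a)) ->
    (forall m, h (sym_j m) = h' (sym_j m)) ->
    forall x, h x = h' x
}.

(* Tensor product C1 (x)_B C2 of commutative algebras (pushout of
   f1 : B -> C1 and f2 : B -> C2); [po_i1 x] is x (x) 1, [po_i2 y] is 1 (x) y. *)
Record alg_pushout (B C1 C2 : comAlgType R)
    (f1 : {lrmorphism B -> C1}) (f2 : {lrmorphism B -> C2}) := AlgPushout {
  po_carrier :> comAlgType R;
  po_i1 : {lrmorphism C1 -> po_carrier};
  po_i2 : {lrmorphism C2 -> po_carrier};
  po_comm : forall b, po_i1 (f1 b) = po_i2 (f2 b);
  po_ex : forall (C : comAlgType R) (g1 : {lrmorphism C1 -> C})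
      (g2 : {lrmorphism C2 -> C}),
    (forall b, g1 (f1 b) = g2 (f2 b)) ->
    exists h : {lrmorphism po_carrier -> C},
      (forall x, h (po_i1 x) = g1 x) /\ (forall y, h (po_i2 y) = g2 y);
  po_uniq : forall (C : comAlgType R) (h h' : {lrmorphism po_carrier -> C}),
    (forall x, h (po_i1 x) = h' (po_i1 x)) ->
    (forall y, h (po_i2 y) = h' (po_i2 y)) ->
    forall z, h z = h' z
}.

End TangentDefs.

(* Main.v *)
Require Import Defs.
From HB Require Import structures.
From mathcomp Require Import all_boot all_algebra.
Import GRing.Theory.
Local Open Scope ring_scope.

Set Implicit Arguments. Unset Strict Implicit. Unset Printing Implicit Defensive.
Import GRing.Theory.
Local Open Scope ring_scope.

Section Dual.
Variables (R : comPzRingType) (C : comAlgType R).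
Record dual := Dual { dfst : C; dsnd : C }.
Definition d2p (x : dual) := (dfst x, dsnd x).
Definition p2d (x : C * C) := Dual x.1 x.2.
Lemma d2pK : cancel d2p p2d. Proof. by case. Qed.
HB.instance Definition _ := Choice.copy dual (can_type d2pK).
Definition dzero := Dual 0 0.
Definition dadd x y := Dual (dfst x + dfst y) (dsnd x + dsnd y).
Definition dopp x := Dual (- dfst x) (- dsnd x).
Lemma daddA : associative dadd. Proof. by move=> [a b] [c d] [e f]; rewrite /dadd /= !addrA. Qed.
Lemma daddC : commutative dadd. Proof. by move=> [a b] [c d]; rewrite /dadd /= addrC (addrC b). Qed.
Lemma dadd0 : left_id dzero dadd. Proof. by move=> [a b]; rewrite /dadd /= !add0r. Qed.
Lemma daddN : left_inverse dzero dopp dadd. Proof. by move=> [a b]; rewrite /dadd /= !addNr. Qed.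
HB.instance Definition _ := GRing.isZmodule.Build dual daddA daddC dadd0 daddN.
Definition done := Dual 1 0.
Definition dmul x y := Dual (dfst x * dfst y) (dfst x * dsnd y + dsnd x * dfst y).
Lemma dmulA : associative dmul.
Proof. move=> [a b] [c d] [e f]; rewrite /dmul /=; congr Dual; first by rewrite mulrA.
by rewrite !mulrDr !mulrDl !mulrA addrA. Qed.
Lemma dmulC : commutative dmul.
Proof. by move=> [a b] [c d]; rewrite /dmul /= mulrC addrC (mulrC a) (mulrC b). Qed.
Lemma dmul1 : left_id done dmul.
Proof. by move=> [a b]; rewrite /dmul /= !mul1r mul0r addr0. Qed.
Lemma dmulD : left_distributive dmul dadd.
Proof. move=> [a b] [c d] [e f]; rewrite /dmul /dadd /=; congr Dual; first by rewrite mulrDl.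
by rewrite !mulrDl addrACA. Qed.
Lemma done_neq0 : done != 0.
Proof. apply/eqP => -[] /eqP; by rewrite oner_eq0. Qed.
HB.instance Definition _ := GRing.Zmodule_isComNzRing.Build dual dmulA dmulC dmul1 dmulD done_neq0.
Definition dscale (r : R) x := Dual (r *: dfst x) (r *: dsnd x).
Lemma dscaleA a b v : dscale a (dscale b v) = dscale (a * b) v.
Proof. by rewrite /dscale /= !scalerA. Qed.
Lemma dscale1 : left_id 1 dscale. Proof. by move=> [a b]; rewrite /dscale /= !scale1r. Qed.
Lemma dscaleDr : right_distributive dscale +%R.
Proof. by move=> r [a b] [c d]; rewrite /dscale /= !scalerDr. Qed.
Lemma dscaleDl v : {morph dscale^~ v: a b / a + b}.
Proof. by move=> a b; rewrite /dscale /= !scalerDl. Qed.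
HB.instance Definition _ := GRing.Zmodule_isLmodule.Build R dual dscaleA dscale1 dscaleDr dscaleDl.
Lemma dscaleAl (a : R) (u v : dual) : a *: (u * v) = (a *: u) * v.
Proof. case: u v => [x y] [z w]; rewrite /GRing.scale /= /dscale /GRing.mul /= /dmul /=.
by rewrite -!scalerAl scalerDr. Qed.
HB.instance Definition _ := GRing.Lmodule_isLalgebra.Build R dual dscaleAl.
HB.instance Definition _ := GRing.Lalgebra_isComAlgebra.Build R dual.
End Dual.

Section Gen.
Variable R : comPzRingType.

Definition gen_uniq (X : comAlgType R) (G : X -> Prop) :=
  forall (C : comAlgType R) (h h' : {lrmorphism X -> C}),
    (forall x, G x -> h x = h' x) -> forall x, h x = h' x.

Section Der.
Variables (X C : comAlgType R) (f : {lrmorphism X -> C}) (δ : X -> C).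
Hypothesis Hd : is_derivation f δ.
Lemma der0 : δ 0 = 0.
Proof. case: Hd => D1 _ _; apply/eqP; rewrite -(subrr (δ 0)) -{2}(addr0 0) D1.
by rewrite addrK eqxx. Qed.
Lemma derN x : δ (- x) = - δ x.
Proof. case: Hd => D1 _ _; apply/eqP; rewrite -subr_eq0 opprK -D1 addNr der0 //. Qed.
Lemma derB x y : δ (x - y) = δ x - δ y.
Proof. by case: Hd => D1 _ _; rewrite D1 derN. Qed.
Lemma der1 : δ 1 = 0.
Proof. by case: Hd => _ _ D3; have := D3 1; rewrite scale1r. Qed.
Lemma derZ r x : δ (r *: x) = r *: δ x.
Proof. case: Hd => _ D2 D3; rewrite -mulr_algl D2 D3 mulr0 addr0 rmorph_alg mulr_algl //. Qed.
Lemma derM x y : δ (x * y) = f x * δ y + f y * δ x.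
Proof. by case: Hd. Qed.
Lemma derD x y : δ (x + y) = δ x + δ y.
Proof. by case: Hd. Qed.
Lemma der_sum (I : Type) (s : seq I) (F : I -> X) :
  δ (\sum_(i <- s) F i) = \sum_(i <- s) δ (F i).
Proof. elim: s => [|i s IH]; first by rewrite !big_nil der0.
by rewrite !big_cons derD IH. Qed.

Definition dmap (x : X) : dual C := Dual (f x) (δ x).
Lemma dmap_lin : linear dmap.
Proof. move=> r x y; rewrite /dmap derD derZ linearP.
by rewrite /GRing.add /= /GRing.scale. Qed.
Lemma dmap_mul : multiplicative dmap.
Proof. split.
  by move=> x y; rewrite /dmap derM rmorphM /GRing.mul /= /dmul /= (mulrC (δ x)).
by rewrite /dmap der1 rmorph1. Qed.
HB.instance Definition _ := GRing.isLinear.Build R X (dual C) *:%R dmap dmap_lin.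
HB.instance Definition _ := GRing.isMultiplicative.Build X (dual C) dmap dmap_mul.
Definition dmapL : {lrmorphism X -> dual C} := dmap.
End Der.

Lemma deriv_uniq (X : comAlgType R) (G : X -> Prop) : gen_uniq G ->
  forall (C : comAlgType R) (f : {lrmorphism X -> C}) δ δ',
  is_derivation f δ -> is_derivation f δ' ->
  (forall x, G x -> δ x = δ' x) -> forall x, δ x = δ' x.
Proof.
move=> HG C f δ δ' H1 H2 HGd x.
have E : forall y, dmapL H1 y = dmapL H2 y.
  by apply: HG => y Gy; rewrite /= /dmap HGd.
by have := E x; rewrite /= /dmap => -[].
Qed.

Section DerComp.
Variables (X Y C : comAlgType R) (f : {lrmorphism X -> Y}) (δ : X -> Y).
Hypothesis Hd : is_derivation f δ.
Lemma der_compl (g : {lrmorphism Y -> C}) : is_derivation (g \o f) (g \o δ).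
Proof. case: Hd => D1 D2 D3; split => [x y|x y|r] /=.
- by rewrite D1 rmorphD.
- by rewrite D2 rmorphD !rmorphM.
- by rewrite D3 rmorph0. Qed.
Lemma der_ext (f' : X -> Y) : (forall x, f x = f' x) -> is_derivation f' δ.
Proof. move=> E; case: Hd => D1 D2 D3; split => // x y; by rewrite D2 !E. Qed.
End DerComp.

Lemma sym_gen (A : comAlgType R) (M : lmodType A) (S : sym_alg M) :
  gen_uniq (fun y : S => (exists a, y = sym_q S a) \/ (exists m, y = sym_j S m)).
Proof. move=> C h h' E; apply: sym_uniq => [a|m]; apply: E; eauto. Qed.

Lemma tan_gen (X : comAlgType R) (G : X -> Prop) (T : tangent_alg X) :
  gen_uniq G ->
  gen_uniq (fun y : T => exists x, G x /\ (y = tan_p T x \/ y = tan_d T x)).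
Proof.
move=> HG C h h' E.
have Ep : forall x, h (tan_p T x) = h' (tan_p T x).
  by apply: (HG C (h \o tan_p T) (h' \o tan_p T)) => x Gx /=; apply: E; eauto.
apply: tan_uniq => // x.
have D1 := der_compl (tan_d_der T) h.
have D2 := der_ext (der_compl (tan_d_der T) h') (fun x => esym (Ep x)).
by apply: (deriv_uniq HG D1 D2) => y Gy /=; apply: E; eauto.
Qed.
End Gen.

Section LR.
Variables (R : comPzRingType) (X Y : comAlgType R) (f : {lrmorphism X -> Y}).
Lemma lrM x y : f (x * y) = f x * f y. Proof. exact: rmorphM. Qed.
Lemma lrD x y : f (x + y) = f x + f y. Proof. exact: rmorphD. Qed.
Lemma lrB x y : f (x - y) = f x - f y. Proof. exact: rmorphB. Qed.
Lemma lr0 : f 0 = 0. Proof. exact: rmorph0. Qed.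
Lemma lr1 : f 1 = 1. Proof. exact: rmorph1. Qed.
Lemma lr_sum (I : Type) (s : seq I) (F : I -> X) :
  f (\sum_(i <- s) F i) = \sum_(i <- s) f (F i).
Proof. exact: rmorph_sum. Qed.
End LR.

Unset Implicit Arguments.

(* Each structure map is an arbitrary
   algebra map having the prescribed values on generators (hence the unique
   such map). *)
Theorem mainTheorem4
  (R : comPzRingType) (A : comAlgType R) (M : lmodType A)
  (S : sym_alg M)
  (TA : tangent_alg A) (TTA : tangent_alg TA)
  (TS : tangent_alg S) (TTS : tangent_alg TS)
  (P : alg_pushout (tan_p TA) (sym_q S))
  (TP : tangent_alg P)
  (* T(p_A) : T(A) -> T^2(A) *)
  (TpA : {lrmorphism TA -> TTA})
  (TpA_p : forall a, TpA (tan_p TA a) = tan_p TTA (tan_p TA a))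
  (TpA_d : forall a, TpA (tan_d TA a) = tan_d TTA (tan_p TA a))
  (* T(q_M) : T(A) -> T(S_A(M)) *)
  (TqM : {lrmorphism TA -> TS})
  (TqM_p : forall a, TqM (tan_p TA a) = tan_p TS (sym_q S a))
  (TqM_d : forall a, TqM (tan_d TA a) = tan_d TS (sym_q S a))
  (* Q = T^2(A) (x)_{T(A)} T(S_A(M)) *)
  (Q : alg_pushout TpA TqM)
  (* z_M : S_A(M) -> A *)
  (zM : {lrmorphism S -> A})
  (zM_q : forall a, zM (sym_q S a) = a)
  (zM_j : forall m, zM (sym_j S m) = 0)
  (* lambda_M : T(S_A(M)) -> S_A(M) *)
  (lamM : {lrmorphism TS -> S})
  (lamM_pq : forall a, lamM (tan_p TS (sym_q S a)) = sym_q S a)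
  (lamM_pj : forall m, lamM (tan_p TS (sym_j S m)) = 0)
  (lamM_dq : forall a, lamM (tan_d TS (sym_q S a)) = 0)
  (lamM_dj : forall m, lamM (tan_d TS (sym_j S m)) = sym_j S m)
  (* 0_{S_A(M)} : T(S_A(M)) -> S_A(M) *)
  (zeroS : {lrmorphism TS -> S})
  (zeroS_p : forall v, zeroS (tan_p TS v) = v)
  (zeroS_d : forall v, zeroS (tan_d TS v) = 0)
  (* 0_{T(A)} : T^2(A) -> T(A) *)
  (zeroTA : {lrmorphism TTA -> TA})
  (zeroTA_pp : forall a, zeroTA (tan_p TTA (tan_p TA a)) = tan_p TA a)
  (zeroTA_pd : forall a, zeroTA (tan_p TTA (tan_d TA a)) = tan_d TA a)
  (zeroTA_dp : forall a, zeroTA (tan_d TTA (tan_p TA a)) = 0)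
  (zeroTA_dd : forall a, zeroTA (tan_d TTA (tan_d TA a)) = 0)
  (* l_A : T^2(A) -> T(A) *)
  (ellA : {lrmorphism TTA -> TA})
  (ellA_pp : forall a, ellA (tan_p TTA (tan_p TA a)) = tan_p TA a)
  (ellA_pd : forall a, ellA (tan_p TTA (tan_d TA a)) = 0)
  (ellA_dp : forall a, ellA (tan_d TTA (tan_p TA a)) = 0)
  (ellA_dd : forall a, ellA (tan_d TTA (tan_d TA a)) = tan_d TA a)
  (* l_{S_A(M)} : T^2(S_A(M)) -> T(S_A(M)) *)
  (ellS : {lrmorphism TTS -> TS})
  (ellS_pp : forall v, ellS (tan_p TTS (tan_p TS v)) = tan_p TS v)
  (ellS_pd : forall v, ellS (tan_p TTS (tan_d TS v)) = 0)
  (ellS_dp : forall v, ellS (tan_d TTS (tan_p TS v)) = 0)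
  (ellS_dd : forall v, ellS (tan_d TTS (tan_d TS v)) = tan_d TS v)
  (* c_{S_A(M)} : T^2(S_A(M)) -> T^2(S_A(M)) *)
  (cS : {lrmorphism TTS -> TTS})
  (cS_pp : forall v, cS (tan_p TTS (tan_p TS v)) = tan_p TTS (tan_p TS v))
  (cS_pd : forall v, cS (tan_p TTS (tan_d TS v)) = tan_d TTS (tan_p TS v))
  (cS_dp : forall v, cS (tan_d TTS (tan_p TS v)) = tan_p TTS (tan_d TS v))
  (cS_dd : forall v, cS (tan_d TTS (tan_d TS v)) = tan_d TTS (tan_d TS v))
  (* T(lambda_M) : T^2(S_A(M)) -> T(S_A(M)) *)
  (TlamM : {lrmorphism TTS -> TS})
  (TlamM_p : forall x, TlamM (tan_p TTS x) = tan_p TS (lamM x))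
  (TlamM_d : forall x, TlamM (tan_d TTS x) = tan_d TS (lamM x))
  (* U : T(A) (x)_A S_A(M) -> T(S_A(M)),  w (x) v |-> T(q_M)(w) v *)
  (U : {lrmorphism P -> TS})
  (U_1 : forall w, U (po_i1 P w) = TqM w)
  (U_2 : forall v, U (po_i2 P v) = tan_p TS v)
  (* l_A (x) 0_{S_A(M)} : Q -> P *)
  (ell0 : {lrmorphism Q -> P})
  (ell0_1 : forall x, ell0 (po_i1 Q x) = po_i1 P (ellA x))
  (ell0_2 : forall y, ell0 (po_i2 Q y) = po_i2 P (zeroS y))
  (* 0_{T(A)} (x) lambda_M : Q -> P *)
  (zlam : {lrmorphism Q -> P})
  (zlam_1 : forall x, zlam (po_i1 Q x) = po_i1 P (zeroTA x))
  (zlam_2 : forall y, zlam (po_i2 Q y) = po_i2 P (lamM y))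
  (* theta : T(T(A) (x)_A S_A(M)) -> T^2(A) (x)_{T(A)} T(S_A(M)) *)
  (theta : {lrmorphism TP -> Q})
  (theta_p : forall w v, theta (tan_p TP (po_i1 P w * po_i2 P v))
                         = po_i1 Q (tan_p TTA w) * po_i2 Q (tan_p TS v))
  (theta_d : forall w v, theta (tan_d TP (po_i1 P w * po_i2 P v))
                         = po_i1 Q (tan_d TTA w) * po_i2 Q (tan_p TS v)
                           + po_i1 Q (tan_p TTA w) * po_i2 Q (tan_d TS v))
  (* a module connection nabla : M -> Omega(A) (x)_A M  (in P) *)
  (nabla : M -> P)
  (nabla_range : forall m, exists s : seq (A * M),
      nabla m = \sum_(x <- s) po_i1 P (tan_d TA x.1) * po_i2 P (sym_j S x.2))
  (nabla_add : forall m m', nabla (m + m') = nabla m + nabla m')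
  (nabla_scale : forall (r : R) (m : M), nabla ((r%:A : A) *: m) = r *: nabla m)
  (nabla_leibniz : forall (a : A) (m : M),
      nabla (a *: m) = po_i1 P (tan_p TA a) * nabla m
                       + po_i1 P (tan_d TA a) * po_i2 P (sym_j S m))
  (* H_nabla : T(S_A(M)) -> T(A) (x)_A S_A(M) *)
  (H : {lrmorphism TS -> P})
  (H_pq : forall a, H (tan_p TS (sym_q S a)) = po_i1 P (tan_p TA a))
  (H_pj : forall m, H (tan_p TS (sym_j S m)) = po_i2 P (sym_j S m))
  (H_dq : forall a, H (tan_d TS (sym_q S a)) = po_i1 P (tan_d TA a))
  (H_dj : forall m, H (tan_d TS (sym_j S m)) = nabla m)
  (* K_nabla : S_A(M) -> T(S_A(M)) *)
  (K : {lrmorphism S -> TS})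
  (K_q : forall a, K (sym_q S a) = tan_p TS (sym_q S a))
  (K_j : forall m, K (sym_j S m) = tan_d TS (sym_j S m) - U (nabla m))
  (* T(H_nabla) : T^2(S_A(M)) -> T(T(A) (x)_A S_A(M)) *)
  (TH : {lrmorphism TTS -> TP})
  (TH_p : forall x, TH (tan_p TTS x) = tan_p TP (H x))
  (TH_d : forall x, TH (tan_d TTS x) = tan_d TP (H x))
  (* T(K_nabla) : T(S_A(M)) -> T^2(S_A(M)) *)
  (TK : {lrmorphism TS -> TTS})
  (TK_p : forall v, TK (tan_p TS v) = tan_p TTS (K v))
  (TK_d : forall v, TK (tan_d TS v) = tan_d TTS (K v)) :
  (* K_nabla is a vertical connection on q_M *)
  [/\ forall v, lamM (K v) = v,
      forall a, K (sym_q S a) = tan_p TS (sym_q S a),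
      forall x, ellS (TK x) = K (lamM x) &
      forall x, TlamM (cS (TK x)) = K (lamM x)]
  /\
  (* H_nabla is a horizontal connection on q_M *)
  [/\ forall w, H (TqM w) = po_i1 P w,
      forall v, H (tan_p TS v) = po_i2 P v,
      forall x, ell0 (theta (TH x)) = H (ellS x) &
      forall x, zlam (theta (TH x)) = H (TlamM (cS x))]
  /\
  (* compatibility: H o K = iota_1 o q_M o z_M, and K(m) + U(H(d m)) = d m *)
  (forall v, H (K v) = po_i2 P (sym_q S (zM v)))
  /\
  (forall m, K (sym_j S m) + U (H (tan_d TS (sym_j S m))) = tan_d TS (sym_j S m)).
Proof.
have dTS := tan_d_der TS. have dTTS := tan_d_der TTS. have dTP := tan_d_der TP.
have GS := @sym_gen _ _ _ S. have GTS := @tan_gen _ _ _ TS GS. have GTTS := @tan_gen _ _ _ TTS GTS.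
have lamM_p : forall v, lamM (tan_p TS v) = sym_q S (zM v).
  apply: (GS _ (lamM \o tan_p TS) (sym_q S \o zM)) => _ [[a ->]|[m ->]] /=.
    by rewrite lamM_pq zM_q.
  by rewrite lamM_pj zM_j lr0.
have H7 : forall w, H (TqM w) = po_i1 P w.
  apply: (@tan_uniq _ _ TA _ (H \o TqM) (po_i1 P)) => a /=.
    by rewrite TqM_p H_pq.
  by rewrite TqM_d H_dq.
have H8 : forall v, H (tan_p TS v) = po_i2 P v.
  apply: (GS _ (H \o tan_p TS) (po_i2 P)) => _ [[a ->]|[m ->]] /=.
    by rewrite H_pq -po_comm.
  by rewrite H_pj.
have HU : forall z, H (U z) = z.
  apply: (@po_uniq _ _ _ _ _ _ P _ (H \o U) idfun) => x /=.
    by transitivity (H (TqM x)); [congr (H _); exact: U_1 | exact: H7].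
  by transitivity (H (tan_p TS x)); [congr (H _); exact: U_2 | exact: H8].
have Un : forall m s, nabla m = \sum_(x <- s) po_i1 P (tan_d TA x.1) * po_i2 P (sym_j S x.2) ->
    U (nabla m) = \sum_(x <- s) tan_d TS (sym_q S x.1) * tan_p TS (sym_j S x.2).
  move=> m s ->; rewrite lr_sum; apply: eq_bigr => x _; rewrite lrM; congr (_ * _); [exact: (etrans (U_1 _) (TqM_d _)) | exact: U_2].
have lamU : forall m, lamM (U (nabla m)) = 0.
  move=> m; case: (nabla_range m) => s Hs; rewrite (Un _ _ Hs) lr_sum big1 // => x _.
  by rewrite lrM lamM_dq mul0r.
have theta_p1 : forall w, theta (tan_p TP (po_i1 P w)) = po_i1 Q (tan_p TTA w).
  by move=> w; have := theta_p w 1; rewrite !lr1 !mulr1.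
have theta_p2 : forall v, theta (tan_p TP (po_i2 P v)) = po_i2 Q (tan_p TS v).
  by move=> v; have := theta_p 1 v; rewrite !lr1 !mul1r.
have theta_d1 : forall w, theta (tan_d TP (po_i1 P w)) = po_i1 Q (tan_d TTA w).
  by move=> w; have := theta_d w 1; rewrite !lr1 !mulr1 (der1 dTS) lr0 mulr0 addr0.
have theta_d2 : forall v, theta (tan_d TP (po_i2 P v)) = po_i2 Q (tan_d TS v).
  by move=> v; have := theta_d 1 v; rewrite !lr1 !mul1r (der1 (tan_d_der TTA)) lr0 mul0r add0r.
split; [split|split; [split|split]].
- apply: (GS _ (lamM \o K) idfun) => _ [[a ->]|[m ->]] /=.
    by rewrite K_q lamM_pq.
  by rewrite K_j lrB lamM_dj lamU subr0.
- exact: K_q.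
- apply: (GTS _ (ellS \o TK) (K \o lamM)) => _ [x [[[a ->]|[m ->]] [->|->]]] /=.
  + by rewrite TK_p K_q ellS_pp lamM_pq K_q.
  + by rewrite TK_d K_q ellS_dp lamM_dq lr0.
  + case: (nabla_range m) => s Hs.
    rewrite TK_p K_j (Un _ _ Hs) !lrB ellS_pd !lr_sum big1 ?subrr ?lamM_pj ?lr0 // => y _.
    by rewrite !lrM ellS_pd mul0r.
  + case: (nabla_range m) => s Hs.
    rewrite TK_d K_j lamM_dj K_j (Un _ _ Hs) (derB dTTS) !lrB ellS_dd (der_sum dTTS) !lr_sum.
    congr (_ - _); apply: eq_bigr => y _.
    by rewrite (derM dTTS) lrD !lrM ellS_pd ellS_dd ellS_pp mul0r add0r mulrC.
- apply: (GTS _ (TlamM \o cS \o TK) (K \o lamM)) => _ [x [[[a ->]|[m ->]] [->|->]]] /=.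
  + by rewrite TK_p K_q cS_pp TlamM_p lamM_pq K_q.
  + by rewrite TK_d K_q cS_dp TlamM_p lamM_dq !lr0.
  + case: (nabla_range m) => s Hs.
    rewrite TK_p K_j (Un _ _ Hs) !lrB !lr_sum cS_pd TlamM_d !lamM_pj (der0 dTS) lr0.
    rewrite big1 ?subrr // => y _.
    by rewrite !lrM cS_pd cS_pp TlamM_d TlamM_p lamM_pj lr0 mulr0.
  + case: (nabla_range m) => s Hs.
    rewrite TK_d K_j lamM_dj K_j (Un _ _ Hs) (derB dTTS) !lrB cS_dd TlamM_d lamM_dj.
    rewrite (der_sum dTTS) !lr_sum.
    congr (_ - _); apply: eq_bigr => y _.
    rewrite (derM dTTS) !lrD !lrM cS_pd cS_dp cS_pp cS_dd !TlamM_d !TlamM_p.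
    by rewrite lamM_pq lamM_dj lamM_pj lamM_dq (der0 dTS) mulr0 addr0.
- exact: H7.
- exact: H8.
- apply: (GTTS _ (ell0 \o theta \o TH) (H \o ellS)) => _ [y0 [[v [[[a ->]|[m ->]] [->|->]]] [->|->]]] /=.
  + by rewrite TH_p H_pq theta_p1 ell0_1 ellA_pp ellS_pp H_pq.
  + by rewrite TH_d H_pq theta_d1 ell0_1 ellA_dp !lr0 ellS_dp lr0.
  + by rewrite TH_p H_dq theta_p1 ell0_1 ellA_pd !lr0 ellS_pd lr0.
  + by rewrite TH_d H_dq theta_d1 ell0_1 ellA_dd ellS_dd H_dq.
  + by rewrite TH_p H_pj theta_p2 ell0_2 zeroS_p ellS_pp H_pj.
  + by rewrite TH_d H_pj theta_d2 ell0_2 zeroS_d !lr0 ellS_dp lr0.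
  + case: (nabla_range m) => s Hs.
    rewrite TH_p H_dj Hs !lr_sum ellS_pd lr0 big1 // => y _.
    by rewrite theta_p lrM ell0_1 ellA_pd lr0 mul0r.
  + case: (nabla_range m) => s Hs.
    rewrite TH_d H_dj Hs (der_sum dTP) !lr_sum ellS_dd H_dj Hs.
    apply: eq_bigr => y _.
    by rewrite theta_d lrD !lrM !ell0_1 !ell0_2 ellA_dd ellA_pd zeroS_p zeroS_d lr0 mul0r addr0.
- apply: (GTTS _ (zlam \o theta \o TH) (H \o TlamM \o cS)) => _ [y0 [[v [[[a ->]|[m ->]] [->|->]]] [->|->]]] /=.
  + by rewrite TH_p H_pq theta_p1 zlam_1 zeroTA_pp cS_pp TlamM_p lamM_pq H_pq.
  + by rewrite TH_d H_pq theta_d1 zlam_1 zeroTA_dp cS_dp TlamM_p lamM_dq !lr0.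
  + by rewrite TH_p H_dq theta_p1 zlam_1 zeroTA_pd cS_pd TlamM_d lamM_pq H_dq.
  + by rewrite TH_d H_dq theta_d1 zlam_1 zeroTA_dd cS_dd TlamM_d lamM_dq (der0 dTS) !lr0.
  + by rewrite TH_p H_pj theta_p2 zlam_2 cS_pp TlamM_p !lamM_pj !lr0.
  + by rewrite TH_d H_pj theta_d2 zlam_2 cS_dp TlamM_p !lamM_dj H_pj.
  + case: (nabla_range m) => s Hs.
    rewrite TH_p H_dj Hs !lr_sum cS_pd TlamM_d lamM_pj (der0 dTS) lr0 big1 // => y _.
    by rewrite theta_p lrM zlam_1 zlam_2 lamM_pj !lr0 mulr0.
  + case: (nabla_range m) => s Hs.
    rewrite TH_d H_dj Hs (der_sum dTP) !lr_sum cS_dd TlamM_d lamM_dj H_dj Hs.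
    apply: eq_bigr => y _.
    by rewrite theta_d lrD !lrM !zlam_1 !zlam_2 zeroTA_dd zeroTA_pd lamM_pj lamM_dj lr0 mul0r add0r.
- apply: (GS _ (H \o K) (po_i2 P \o sym_q S \o zM)) => _ [[a ->]|[m ->]] /=.
    by rewrite K_q H_pq zM_q po_comm.
  by rewrite K_j lrB HU H_dj subrr zM_j !lr0.
- by move=> m; rewrite K_j H_dj subrK.
Qed.
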